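(* Any two countable dense subsets of the Urysohn space $\mathbb U$ are almost isometric.
   Context: $\mathbb U$ denotes Urysohn's universal separable metric space: the unique (up to isometry) complete separable metric space such that for every finite metric space $F=\{x_0,\dots,x_n\}$, every isometry $\{x_0,\dots,x_{n-1}\}\to\mathbb U$ extends to an isometry $F\to\mathbb U$. For $\lambda>1$, an injection $f$ is $\lambda$-bi-Lipschitz if for all distinct $a,b$ in its domain $d(f(a),f(b))<\lambda d(a,b)$ and $d(a,b)<\lambda d(f(a),f(b))$. Two metric spaces $X,Y$ are almost isometric if for every $\lambda>1$ there is a $\lambda$-bi-Lipschitz bijection from $X$ onto $Y$. *)

(* Defs.v *)
From Stdlib Require Import Reals.
Open Scope R_scope.

Definition is_metric {U : Type} (d : U -> U -> R) : Prop :=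
  (forall x y, 0 <= d x y) /\
  (forall x y, d x y = 0 <-> x = y) /\
  (forall x y, d x y = d y x) /\
  (forall x y z, d x z <= d x y + d y z).

Definition cauchy_seq {U : Type} (d : U -> U -> R) (u : nat -> U) : Prop :=
  forall eps, 0 < eps -> exists N, forall m n, (N <= m)%nat -> (N <= n)%nat ->
    d (u m) (u n) < eps.

Definition converges_to {U : Type} (d : U -> U -> R) (u : nat -> U) (l : U) : Prop :=
  forall eps, 0 < eps -> exists N, forall n, (N <= n)%nat -> d (u n) l < eps.

Definition complete_metric {U : Type} (d : U -> U -> R) : Prop :=
  forall u, cauchy_seq d u -> exists l, converges_to d u l.

Definition countable_set {U : Type} (A : U -> Prop) : Prop :=
  exists g : {x : U | A x} -> nat, forall a b, g a = g b -> a = b.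

Definition dense_set {U : Type} (d : U -> U -> R) (A : U -> Prop) : Prop :=
  forall x eps, 0 < eps -> exists a, A a /\ d x a < eps.

Definition separable {U : Type} (d : U -> U -> R) : Prop :=
  exists A : U -> Prop, countable_set A /\ dense_set d A.

(* A finite metric space F = {x_0, ..., x_n}, points indexed by 0..n. *)
Definition finite_metric (n : nat) (dF : nat -> nat -> R) : Prop :=
  (forall i j, (i <= n)%nat -> (j <= n)%nat -> 0 <= dF i j) /\
  (forall i j, (i <= n)%nat -> (j <= n)%nat -> (dF i j = 0 <-> i = j)) /\
  (forall i j, (i <= n)%nat -> (j <= n)%nat -> dF i j = dF j i) /\
  (forall i j k, (i <= n)%nat -> (j <= n)%nat -> (k <= n)%nat ->
      dF i k <= dF i j + dF j k).

Definition urysohn_extension {U : Type} (d : U -> U -> R) : Prop :=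
  forall (n : nat) (dF : nat -> nat -> R) (f : nat -> U),
    finite_metric n dF ->
    (forall i j, (i < n)%nat -> (j < n)%nat -> d (f i) (f j) = dF i j) ->
    exists g : nat -> U,
      (forall i, (i < n)%nat -> g i = f i) /\
      (forall i j, (i <= n)%nat -> (j <= n)%nat -> d (g i) (g j) = dF i j).

Definition is_urysohn_space {U : Type} (d : U -> U -> R) : Prop :=
  is_metric d /\ complete_metric d /\ separable d /\ urysohn_extension d.

Definition bi_lipschitz {U : Type} (d : U -> U -> R) (A B : U -> Prop)
    (lam : R) (h : {x : U | A x} -> {x : U | B x}) : Prop :=
  forall a b, a <> b ->
    d (proj1_sig (h a)) (proj1_sig (h b)) < lam * d (proj1_sig a) (proj1_sig b) /\
    d (proj1_sig a) (proj1_sig b) < lam * d (proj1_sig (h a)) (proj1_sig (h b)).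

Definition almost_isometric {U : Type} (d : U -> U -> R) (A B : U -> Prop) : Prop :=
  forall lam, 1 < lam ->
    exists h : {x : U | A x} -> {x : U | B x},
      (forall a b, h a = h b -> a = b) /\
      (forall b, exists a, h a = b) /\
      bi_lipschitz d A B lam h.

(* Main.v *)
Require Import Defs.
From Stdlib Require Import Reals Lra Lia List ClassicalEpsilon ProofIrrelevance.
Open Scope R_scope.
Import ListNotations.

Lemma unif_eps (n:nat) (P : nat -> R -> Prop) :
  (forall i e e', 0 < e' -> e' <= e -> P i e -> P i e') ->
  (forall i, (i < n)%nat -> exists e, 0 < e /\ P i e) ->
  exists e, 0 < e /\ forall i, (i < n)%nat -> P i e.
Proof.
  intros Hm. induction n as [|n IH]; intros H.
  - exists 1; split; [lra| intros; lia].
  - destruct IH as [e1 [He1 H1]]. { intros i Hi; apply H; lia. }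
    destruct (H n (Nat.lt_succ_diag_r n)) as [e2 [He2 H2]].
    exists (Rmin e1 e2); split. { apply Rmin_glb_lt; lra. }
    intros i Hi. destruct (Nat.eq_dec i n) as [->|Hne].
    + apply (Hm n e2); auto. apply Rmin_glb_lt; lra. apply Rmin_r.
    + apply (Hm i e1). apply Rmin_glb_lt; lra. apply Rmin_l. apply H1; lia.
Qed.

Fixpoint fmin (f : nat -> R) (b : R) (t : list nat) : R :=
  match t with nil => b | y :: t' => Rmin (f y) (fmin f b t') end.

Lemma fmin_le f b t : fmin f b t <= b /\ forall y, In y t -> fmin f b t <= f y.
Proof.
  induction t as [|y t IH]; simpl.
  - split; [lra| tauto].
  - destruct IH as [H1 H2]. split.
    + eapply Rle_trans; [apply Rmin_r|exact H1].
    + intros z [<-|Hz]. apply Rmin_l. eapply Rle_trans; [apply Rmin_r|auto].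
Qed.

Lemma fmin_att f b t : fmin f b t = b \/ exists y, In y t /\ fmin f b t = f y.
Proof.
  induction t as [|y t IH]; simpl. left; auto.
  destruct (Rle_dec (f y) (fmin f b t)) as [r|r].
  - right. exists y. split; [left; reflexivity| apply Rmin_left; exact r].
  - rewrite Rmin_right by lra. destruct IH as [H|[z [Hz H]]]. left; auto. right; exists z; split; [right; exact Hz| exact H].
Qed.

Definition mn (f : nat -> R) (l : list nat) : R :=
  match l with nil => 0 | x :: t => fmin f (f x) t end.

Lemma mn_le f l y : In y l -> mn f l <= f y.
Proof.
  destruct l as [|x t]; simpl; [tauto|].
  intros [<-|Hy]. apply (proj1 (fmin_le f (f x) t)). apply (proj2 (fmin_le f (f x) t)); auto.
Qed.

Lemma mn_att f l : l <> nil -> exists y, In y l /\ mn f l = f y.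
Proof.
  destruct l as [|x t]; simpl; [tauto|]. intros _.
  destruct (fmin_att f (f x) t) as [H|[z [Hz H]]].
  exists x; auto. exists z; auto.
Qed.

Lemma le_cases i n : (i <= n)%nat -> (i < n)%nat \/ i = n.
Proof. lia. Qed.

Definition Kdf {U : Type} (d : U -> U -> R) (n : nat) (bi : nat -> U) (g : nat -> R)
  (i j : nat) : R :=
  if Nat.ltb i n then (if Nat.ltb j n then d (bi i) (bi j) else g i)
  else (if Nat.ltb j n then g j else 0).

Ltac cs n i Hi := let H := fresh in destruct (le_cases i n Hi) as [H|H];
  [rewrite (proj2 (Nat.ltb_lt i n) H) | subst i; rewrite Nat.ltb_irrefl].

Lemma katetov {U : Type} (d : U -> U -> R) : is_metric d -> urysohn_extension d ->
  forall n (bi : nat -> U) (g : nat -> R),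
  (forall i j, (i<n)%nat -> (j<n)%nat -> i<>j -> 0 < d (bi i) (bi j)) ->
  (forall i, (i<n)%nat -> 0 < g i) ->
  (forall i k, (i<n)%nat -> (k<n)%nat -> g i <= d (bi i) (bi k) + g k) ->
  (forall i k, (i<n)%nat -> (k<n)%nat -> d (bi i) (bi k) <= g i + g k) ->
  exists u, forall i, (i<n)%nat -> d u (bi i) = g i.
Proof.
  intros (Hpos & Hz & Hsym & Htri) Hext n bi g Hd Hg Hl Hs.
  destruct (Hext n (Kdf d n bi g) bi) as [gp [Hg1 Hg2]].
  - unfold finite_metric, Kdf. split; [|split; [|split]].
    + intros i j Hi Hj. cs n i Hi; cs n j Hj; try apply Hpos; try lra; left; apply Hg; assumption.
    + intros i j Hi Hj. cs n i Hi; cs n j Hj; split; intros E.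
      * destruct (Nat.eq_dec i j) as [|Hne]; auto. specialize (Hd i j H H0 Hne). lra.
      * subst. apply Hz; auto.
      * specialize (Hg i H). lra.
      * lia.
      * specialize (Hg j H). lra.
      * lia.
      * reflexivity.
      * reflexivity.
    + intros i j Hi Hj. cs n i Hi; cs n j Hj; auto.
    + intros i j k Hi Hj Hk. cs n i Hi; cs n j Hj; cs n k Hk.
      * apply Htri.
      * apply Hl; auto.
      * apply Hs; auto.
      * lra.
      * rewrite (Hsym (bi j)). specialize (Hl k j H0 H). lra.
      * specialize (Hg j H); lra.
      * lra.
      * lra.
  - intros i j Hi Hj. unfold Kdf. rewrite (proj2 (Nat.ltb_lt i n) Hi), (proj2 (Nat.ltb_lt j n) Hj). reflexivity.
  - exists (gp n). intros i Hi. rewrite <- (Hg1 i Hi). rewrite Hg2; try lia.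
    unfold Kdf. rewrite Nat.ltb_irrefl, (proj2 (Nat.ltb_lt i n) Hi). reflexivity.
Qed.

Definition Inv {U : Type} (d : U -> U -> R) (A B : U -> Prop) (lam : R) (u0 : U)
  (l : list (U*U)) : Prop :=
 (forall i, (i < length l)%nat -> A (fst (nth i l (u0,u0))) /\ B (snd (nth i l (u0,u0)))) /\
 (forall i j, (i < length l)%nat -> (j < length l)%nat -> i <> j ->
   d (snd (nth i l (u0,u0))) (snd (nth j l (u0,u0))) < lam * d (fst (nth i l (u0,u0))) (fst (nth j l (u0,u0))) /\
   d (fst (nth i l (u0,u0))) (fst (nth j l (u0,u0))) < lam * d (snd (nth i l (u0,u0))) (snd (nth j l (u0,u0)))).

Lemma step {U : Type} (d : U -> U -> R) (A B : U -> Prop) lam u0 l a :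
  is_metric d -> urysohn_extension d -> dense_set d B -> 1 < lam ->
  Inv d A B lam u0 l -> A a ->
  (forall i, (i < length l)%nat -> fst (nth i l (u0,u0)) <> a) ->
  exists b, Inv d A B lam u0 (l ++ [(a,b)]).
Proof.
  intros Hmet Hext HdB Hlam [HAB Hin] Ha Hnew.
  pose proof Hmet as (Hpos & Hz & Hsym & Htri).
  set (n := length l) in *.
  set (ai := fun i => fst (nth i l (u0,u0))).
  set (bi := fun i => snd (nth i l (u0,u0))).
  assert (Hin' : forall i j, (i<n)%nat -> (j<n)%nat -> i<>j ->
     d (bi i) (bi j) < lam * d (ai i) (ai j) /\ d (ai i) (ai j) < lam * d (bi i) (bi j))
    by exact Hin.
  clear Hin.
  assert (Hzero : forall x, d x x = 0) by (intro x; apply Hz; reflexivity).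
  assert (Hs : forall i, (i<n)%nat -> 0 < d a (ai i)).
  { intros i Hi. destruct (Hpos a (ai i)) as [h|h]; auto. exfalso.
    apply (Hnew i Hi). symmetry. apply Hz. auto. }
  assert (Hdist : forall i j, (i<n)%nat -> (j<n)%nat -> i<>j -> 0 < d (bi i) (bi j)).
  { intros i j Hi Hj Hne. destruct (Hin' i j Hi Hj Hne) as [H1 H2].
    pose proof (Hpos (bi i) (bi j)). pose proof (Hpos (ai i) (ai j)). nra. }
  destruct (unif_eps n (fun i e => forall j, (j<n)%nat -> d (bi i) (bi j) <= (1-e) * lam * d (ai i) (ai j)))
    as [e [He Hsl]].
  { intros i e e' He' Hle H j Hj. specialize (H j Hj). pose proof (Hpos (ai i) (ai j)).
    assert (0 <= (e - e') * (lam * d (ai i) (ai j))) by (apply Rmult_le_pos; nra). nra. }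
  { intros i Hi. apply unif_eps.
    - intros j e e' He' Hle H. pose proof (Hpos (ai i) (ai j)).
      assert (0 <= (e - e') * (lam * d (ai i) (ai j))) by (apply Rmult_le_pos; nra). nra.
    - intros j Hj. destruct (Nat.eq_dec i j) as [<-|Hne].
      + exists 1. split; [lra|]. rewrite !Hzero. lra.
      + destruct (Hin' i j Hi Hj Hne) as [H1 H2].
        pose proof (Hpos (bi i) (bi j)).
        assert (HD : 0 < lam * d (ai i) (ai j)) by lra.
        exists ((lam * d (ai i) (ai j) - d (bi i) (bi j)) / (lam * d (ai i) (ai j))).
        split. apply Rdiv_lt_0_compat; lra.
        assert (HD2 : 0 < d (ai i) (ai j)) by nra.
        apply Req_le. field. split; lra. }
  set (mu := Rmax 1 ((1-e)*lam)).
  assert (Hmu1 : 1 <= mu) by apply Rmax_l.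
  assert (Hmu2 : (1-e)*lam <= mu) by apply Rmax_r.
  assert (Hmu3 : mu < lam) by (apply Rmax_lub_lt; nra).
  set (g := fun i => mn (fun j => mu * d a (ai j) + d (bi i) (bi j)) (seq 0 n)).
  assert (G1 : forall i j, (j<n)%nat -> g i <= mu * d a (ai j) + d (bi i) (bi j)).
  { intros i j Hj. unfold g. apply (mn_le (fun j => mu * d a (ai j) + d (bi i) (bi j))).
    apply in_seq. lia. }
  assert (G2 : forall i, (i<n)%nat -> exists j, (j<n)%nat /\ g i = mu * d a (ai j) + d (bi i) (bi j)).
  { intros i Hi. destruct (mn_att (fun j => mu * d a (ai j) + d (bi i) (bi j)) (seq 0 n)) as [j [Hj E]].
    - destruct n; [lia|]. simpl. discriminate.
    - exists j. split; [apply in_seq in Hj; lia| exact E]. }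
  assert (Glip : forall i k, (i<n)%nat -> (k<n)%nat -> g i <= d (bi i) (bi k) + g k).
  { intros i k Hi Hk. destruct (G2 k Hk) as [j [Hj E]]. rewrite E.
    pose proof (G1 i j Hj). pose proof (Htri (bi i) (bi k) (bi j)). lra. }
  assert (Gsum : forall i k, (i<n)%nat -> (k<n)%nat -> d (bi i) (bi k) <= g i + g k).
  { intros i k Hi Hk. destruct (G2 i Hi) as [p [Hp Ep]]. destruct (G2 k Hk) as [q [Hq Eq]].
    rewrite Ep, Eq.
    pose proof (Hsl p Hp q Hq).
    pose proof (Htri (ai p) a (ai q)). rewrite (Hsym (ai p) a) in H0.
    pose proof (Hpos (ai p) (ai q)).
    assert (mu * d (ai p) (ai q) <= mu * (d a (ai p) + d a (ai q))) by (apply Rmult_le_compat_l; lra).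
    assert ((1 - e) * lam * d (ai p) (ai q) <= mu * d (ai p) (ai q)) by (apply Rmult_le_compat_r; lra).
    pose proof (Htri (bi i) (bi p) (bi k)). pose proof (Htri (bi p) (bi q) (bi k)).
    rewrite (Hsym (bi q) (bi k)) in H5. lra. }
  assert (Gup : forall i, (i<n)%nat -> g i < lam * d a (ai i)).
  { intros i Hi. pose proof (G1 i i Hi). rewrite Hzero in H. pose proof (Hs i Hi).
    assert (mu * d a (ai i) < lam * d a (ai i)) by (apply Rmult_lt_compat_r; lra). lra. }
  assert (Glow : forall i, (i<n)%nat -> d a (ai i) < lam * g i).
  { intros i Hi. destruct (G2 i Hi) as [j [Hj E]]. rewrite E.
    pose proof (Hs i Hi). pose proof (Hs j Hj).
    assert (Hlm : 1 < lam * mu) by nra.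
    destruct (Nat.eq_dec i j) as [<-|Hne].
    - rewrite Hzero. nra.
    - destruct (Hin' i j Hi Hj Hne) as [H1 H2].
      pose proof (Htri a (ai j) (ai i)). rewrite (Hsym (ai j) (ai i)) in H3. nra. }
  assert (Gpos : forall i, (i<n)%nat -> 0 < g i).
  { intros i Hi. pose proof (Glow i Hi). pose proof (Hs i Hi). nra. }
  destruct (katetov d Hmet Hext n bi g Hdist Gpos Glip Gsum) as [u Hu].
  destruct (unif_eps n (fun i e => g i + e < lam * d a (ai i) /\ d a (ai i) < lam * (g i - e)))
    as [e2 [He2 Hc]].
  { intros i e0 e' He' Hle [H1 H2]. split; nra. }
  { intros i Hi. pose proof (Gup i Hi). pose proof (Glow i Hi).
    set (e1 := (lam * d a (ai i) - g i)/2).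
    set (e3 := (lam * g i - d a (ai i))/(2*lam)).
    assert (lam * e3 = (lam * g i - d a (ai i))/2) by (unfold e3; field; lra).
    assert (0 < e3) by (unfold e3; apply Rdiv_lt_0_compat; lra).
    exists (Rmin e1 e3). split. apply Rmin_glb_lt; unfold e1; lra.
    pose proof (Rmin_l e1 e3). pose proof (Rmin_r e1 e3).
    split. unfold e1 in *; lra.
    assert (lam * Rmin e1 e3 <= lam * e3) by (apply Rmult_le_compat_l; lra). nra. }
  destruct (HdB u e2 He2) as [b [Hb Hub]].
  exists b.
  assert (Hnb : forall i, (i<n)%nat -> d b (bi i) < lam * d a (ai i) /\ d a (ai i) < lam * d b (bi i)).
  { intros i Hi. destruct (Hc i Hi) as [H1 H2]. pose proof (Hu i Hi).
    pose proof (Htri b u (bi i)). pose proof (Htri u b (bi i)). rewrite (Hsym b u) in H0.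
    split. lra.
    assert (lam * (g i - e2) <= lam * d b (bi i)) by (apply Rmult_le_compat_l; lra). lra. }
  assert (Hnth : forall i, (i < length (l ++ [(a,b)]))%nat ->
     ((i < n)%nat /\ nth i (l ++ [(a,b)]) (u0,u0) = nth i l (u0,u0)) \/
     (i = n /\ nth i (l ++ [(a,b)]) (u0,u0) = (a,b))).
  { intros i Hi. rewrite length_app in Hi. simpl in Hi.
    destruct (le_cases i n) as [H|H]; [lia| |].
    - left. split; auto. apply app_nth1. exact H.
    - right. split; auto. subst i. apply nth_middle. }
  split.
  - intros i Hi. destruct (Hnth i Hi) as [[H E]|[H E]]; rewrite E.
    + apply HAB; exact H.
    + simpl; auto.
  - intros i j Hi Hj Hne.
    destruct (Hnth i Hi) as [[H E]|[H E]]; destruct (Hnth j Hj) as [[H' E']|[H' E']];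
      rewrite E, E'; simpl.
    + apply (Hin' i j H H' Hne).
    + destruct (Hnb i H) as [p q]. unfold ai, bi in p, q.
      rewrite (Hsym _ b), (Hsym _ a). split; assumption.
    + destruct (Hnb j H') as [p q]. unfold ai, bi in p, q. split; assumption.
    + lia.
Qed.

Definition sw {U : Type} (p : U*U) : U*U := (snd p, fst p).
Lemma sw_sw {U : Type} (p : U*U) : sw (sw p) = p.
Proof. destruct p; reflexivity. Qed.

Lemma Inv_sw {U : Type} (d : U -> U -> R) A B lam u0 l :
  Inv d A B lam u0 l -> Inv d B A lam u0 (map sw l).
Proof.
  intros [H1 H2]. split.
  - intros i Hi. rewrite length_map in Hi. change (u0,u0) with (sw (u0,u0)).
    rewrite map_nth. simpl. destruct (H1 i Hi). auto.
  - intros i j Hi Hj Hne. rewrite length_map in Hi, Hj. change (u0,u0) with (sw (u0,u0)).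
    rewrite !map_nth. simpl. destruct (H2 i j Hi Hj Hne). auto.
Qed.

Lemma Inv_In {U : Type} (d : U -> U -> R) A B lam u0 l p :
  Inv d A B lam u0 l -> In p l -> A (fst p) /\ B (snd p).
Proof.
  intros [H1 _] Hp. destruct (In_nth l p (u0,u0) Hp) as [i [Hi E]].
  rewrite <- E. auto.
Qed.

Lemma Inv_pair {U : Type} (d : U -> U -> R) A B lam u0 l p q :
  Inv d A B lam u0 l -> In p l -> In q l ->
  p = q \/ (d (snd p) (snd q) < lam * d (fst p) (fst q) /\ d (fst p) (fst q) < lam * d (snd p) (snd q)).
Proof.
  intros [_ H2] Hp Hq. destruct (In_nth l p (u0,u0) Hp) as [i [Hi E]].
  destruct (In_nth l q (u0,u0) Hq) as [j [Hj E']].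
  destruct (Nat.eq_dec i j) as [<-|Hne].
  - left. rewrite <- E, <- E'. reflexivity.
  - right. rewrite <- E, <- E'. auto.
Qed.

Lemma ext_dom {U : Type} (d : U -> U -> R) (A B : U -> Prop) lam u0 l a :
  is_metric d -> urysohn_extension d -> dense_set d B -> 1 < lam ->
  Inv d A B lam u0 l -> A a ->
  exists l', Inv d A B lam u0 l' /\ incl l l' /\ exists b, In (a,b) l'.
Proof.
  intros Hm He Hd Hl HI Ha.
  destruct (classic (exists i, (i < length l)%nat /\ fst (nth i l (u0,u0)) = a)) as [[i [Hi E]]|Hn].
  - exists l. split; [auto|split; [apply incl_refl|]].
    exists (snd (nth i l (u0,u0))). rewrite <- E, <- surjective_pairing. apply nth_In; auto.
  - destruct (step d A B lam u0 l a Hm He Hd Hl HI Ha) as [b Hb].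
    { intros i Hi E. apply Hn. exists i; auto. }
    exists (l ++ [(a,b)]). split; [auto|split].
    + apply incl_appl, incl_refl.
    + exists b. apply in_or_app. right. left. reflexivity.
Qed.

Lemma ext_rng {U : Type} (d : U -> U -> R) (A B : U -> Prop) lam u0 l c :
  is_metric d -> urysohn_extension d -> dense_set d A -> 1 < lam ->
  Inv d A B lam u0 l -> B c ->
  exists l', Inv d A B lam u0 l' /\ incl l l' /\ exists a, In (a,c) l'.
Proof.
  intros Hm He Hd Hl HI Hc.
  destruct (ext_dom d B A lam u0 (map sw l) c Hm He Hd Hl (Inv_sw d A B lam u0 l HI) Hc)
    as [L [HL [Hinc [a Ha]]]].
  exists (map sw L). split; [|split].
  - apply (Inv_sw d B A lam u0 L HL).
  - intros p Hp. rewrite <- (sw_sw p). apply in_map. apply Hinc. apply in_map. exact Hp.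
  - exists a. apply (in_map sw L (c,a)). exact Ha.
Qed.

Lemma my_choice {X Y : Type} (P : X -> Y -> Prop) :
  (forall x, exists y, P x y) -> exists f : X -> Y, forall x, P x (f x).
Proof.
  intros H. exists (fun x => proj1_sig (constructive_indefinite_description _ (H x))).
  intro x. exact (proj2_sig (constructive_indefinite_description _ (H x))).
Qed.

Lemma sig_eq {U : Type} (P : U -> Prop) (x y : {z : U | P z}) :
  proj1_sig x = proj1_sig y -> x = y.
Proof.
  destruct x as [x Hx], y as [y Hy]; simpl. intros ->. f_equal. apply proof_irrelevance.
Qed.

Lemma enum {U : Type} (A : U -> Prop) :
  countable_set A -> (exists a, A a) ->
  exists e : nat -> U, (forall k, A (e k)) /\ forall x, A x -> exists k, e k = x.
Proof.
  intros [g Hg] [a0 Ha0].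
  exists (fun k => proj1_sig (epsilon (inhabits (exist A a0 Ha0)) (fun s => g s = k))).
  split.
  - intro k. apply proj2_sig.
  - intros x Hx. exists (g (exist A x Hx)).
    pose proof (epsilon_spec (inhabits (exist A a0 Ha0)) (fun s => g s = g (exist A x Hx))
      (ex_intro _ (exist A x Hx) eq_refl)) as H.
    apply Hg in H. rewrite H. reflexivity.
Qed.

Theorem theorem3p6 (U : Type) (d : U -> U -> R) :
  is_urysohn_space d ->
  forall A B : U -> Prop,
    countable_set A -> dense_set d A ->
    countable_set B -> dense_set d B ->
    almost_isometric d A B.
Proof.
  intros [Hm [_ [_ He]]] A B HcA HdA HcB HdB lam Hlam.
  pose proof Hm as (Hpos & Hz & Hsym & Htri).
  destruct (classic (inhabited U)) as [[u0]|Hemp].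
  2:{ exists (fun x => False_rect _ (Hemp (inhabits (proj1_sig x)))).
      split; [|split].
      - intros x. exfalso. exact (Hemp (inhabits (proj1_sig x))).
      - intros y. exfalso. exact (Hemp (inhabits (proj1_sig y))).
      - intros x. exfalso. exact (Hemp (inhabits (proj1_sig x))). }
  destruct (enum A HcA) as [eA [HeA1 HeA2]].
  { destruct (HdA u0 1 Rlt_0_1) as [a [Ha _]]. exists a; exact Ha. }
  destruct (enum B HcB) as [eB [HeB1 HeB2]].
  { destruct (HdB u0 1 Rlt_0_1) as [a [Ha _]]. exists a; exact Ha. }
  set (I := Inv d A B lam u0).
  destruct (my_choice (fun (p : list (U*U) * U) l' =>
     I (fst p) -> A (snd p) -> I l' /\ incl (fst p) l' /\ exists b, In (snd p, b) l')) as [F HF].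
  { intros [l a]. simpl. destruct (classic (I l /\ A a)) as [[H1 H2]|Hn].
    - destruct (ext_dom d A B lam u0 l a Hm He HdB Hlam H1 H2) as [l' Hl'].
      exists l'; auto.
    - exists nil. intros H1 H2. exfalso; auto. }
  destruct (my_choice (fun (p : list (U*U) * U) l' =>
     I (fst p) -> B (snd p) -> I l' /\ incl (fst p) l' /\ exists a, In (a, snd p) l')) as [G HG].
  { intros [l c]. simpl. destruct (classic (I l /\ B c)) as [[H1 H2]|Hn].
    - destruct (ext_rng d A B lam u0 l c Hm He HdA Hlam H1 H2) as [l' Hl'].
      exists l'; auto.
    - exists nil. intros H1 H2. exfalso; auto. }
  destruct (ex_intro (fun L : nat -> list (U*U) =>
      L 0%nat = nil /\ forall k, L (S k) = G (F (L k, eA k), eB k))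
     (fix L (k : nat) : list (U*U) :=
        match k with 0%nat => nil | S k => G (F (L k, eA k), eB k) end)
     (conj eq_refl (fun k => eq_refl))) as [L [HL0 HLS]].
  assert (HLk : forall k, I (L k) /\ incl (L k) (L (S k)) /\
      (exists b, In (eA k, b) (L (S k))) /\ (exists a, In (a, eB k) (L (S k)))).
  { induction k as [|k IH].
    - rewrite HLS, HL0.
      assert (HI0 : I nil) by (split; simpl; intros; lia).
      destruct (HF (nil, eA 0%nat) HI0 (HeA1 0%nat)) as [H1 [H2 [b H3]]].
      destruct (HG (F (nil, eA 0%nat), eB 0%nat) H1 (HeB1 0%nat)) as [H4 [H5 [a H6]]].
      simpl in *. split; auto. split; [intros x []|]. split; eauto.
    - destruct IH as [IH1 [IH2 _]].
      assert (HI : I (L (S k))).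
      { rewrite HLS. destruct (HF (L k, eA k) IH1 (HeA1 k)) as [H1 _].
        exact (proj1 (HG (F (L k, eA k), eB k) H1 (HeB1 k))). }
      rewrite (HLS (S k)).
      destruct (HF (L (S k), eA (S k)) HI (HeA1 (S k))) as [H1 [H2 [b H3]]].
      destruct (HG (F (L (S k), eA (S k)), eB (S k)) H1 (HeB1 (S k))) as [H4 [H5 [a H6]]].
      simpl in *. split; auto. split; [intros x Hx; apply H5, H2, Hx|]. split; eauto. }
  assert (Hmono : forall k m, (k <= m)%nat -> incl (L k) (L m)).
  { intros k m Hkm. induction Hkm. apply incl_refl.
    eapply incl_tran; [exact IHHkm| apply (HLk m)]. }
  assert (Hcomp : forall p q k m, In p (L k) -> In q (L m) ->
     p = q \/ (d (snd p) (snd q) < lam * d (fst p) (fst q) /\ d (fst p) (fst q) < lam * d (snd p) (snd q))).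
  { intros p q k m Hp Hq. apply (Inv_pair d A B lam u0 (L (Nat.max k m))).
    - apply HLk.
    - apply (Hmono k); [lia|exact Hp].
    - apply (Hmono m); [lia|exact Hq]. }
  assert (Hineq_fst : forall x y z, d y z < lam * d x x -> False).
  { intros x y z H. rewrite (proj2 (Hz x x) eq_refl) in H. pose proof (Hpos y z). lra. }
  destruct (my_choice (fun (x : {a : U | A a}) b => B b /\ exists k, In (proj1_sig x, b) (L k)))
    as [hf Hhf].
  { intros [x Hx]. simpl. destruct (HeA2 x Hx) as [k Ek].
    destruct (HLk k) as [_ [_ [[b Hb] _]]]. rewrite Ek in Hb. exists b. split.
    - exact (proj2 (Inv_In d A B lam u0 _ _ (proj1 (HLk (S k))) Hb)).
    - exists (S k); exact Hb. }
  exists (fun x => exist B (hf x) (proj1 (Hhf x))).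
  split; [|split].
  - intros x y Hxy. apply (f_equal (@proj1_sig _ _)) in Hxy. simpl in Hxy.
    apply sig_eq.
    destruct (Hhf x) as [_ [k Hk]]. destruct (Hhf y) as [_ [m Hm']].
    destruct (Hcomp _ _ k m Hk Hm') as [E|[E1 E2]].
    + simpl in E. congruence.
    + simpl in E1, E2. rewrite Hxy in E2. exfalso; eapply Hineq_fst; exact E2.
  - intros [c Hc]. destruct (HeB2 c Hc) as [k Ek].
    destruct (HLk k) as [_ [_ [_ [a Ha]]]]. rewrite Ek in Ha.
    pose proof (proj1 (Inv_In d A B lam u0 _ _ (proj1 (HLk (S k))) Ha)) as HA. simpl in HA.
    exists (exist A a HA). apply sig_eq. simpl.
    destruct (Hhf (exist A a HA)) as [_ [m Hm']]. simpl in Hm'.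
    destruct (Hcomp _ _ m (S k) Hm' Ha) as [E|[E1 E2]].
    + congruence.
    + simpl in E1, E2. exfalso; eapply Hineq_fst; exact E1.
  - intros x y Hxy. simpl.
    destruct (Hhf x) as [_ [k Hk]]. destruct (Hhf y) as [_ [m Hm']].
    destruct (Hcomp _ _ k m Hk Hm') as [E|[E1 E2]].
    + exfalso. apply Hxy. apply sig_eq. congruence.
    + simpl in E1, E2. auto.
Qed.
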